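(* Let $F:\mathbb{P}^2\to\mathbb{P}^5$ be the morphism $$(x;y;z)\mapsto\big(xyz;\ x(z^2-xy);\ x(xz-y^2);\ y(x^2-yz);\ y(xy-z^2);\ 3xyz-(x^3+y^3+z^3)\big).$$ Then $F$ is an immersion, i.e. its differential is injective on the tangent space at every point of $\mathbb{P}^2$. Moreover, $F$ is injective except that the three points $(1;0;0),(0;1;0),(0;0;1)$ are all mapped to $(0;0;0;0;0;1)$ and the three points $(1;1;1),(\omega;\omega^2;1),(\omega^2;\omega;1)$ are all mapped to $(1;0;0;0;0;0)$, where $\omega$ is a primitive cube root of unity.
   Context: Work over $\mathbb{C}$. This $F$ equals $p\circ\phi_S$, where $p$ is the Plücker embedding of $\mathrm{Gr}(2,\mathbb{C}^4)$ in $\mathbb{P}^5$ and $\phi_S$ is the morphism $\mathbb{P}^2\to\mathrm{Gr}(2,\mathbb{C}^4)$ given by the generating sections of $T_{\mathbb{P}^2}$ which are the images under the Euler surjection $\mathcal{O}(1)^3\to T_{\mathbb{P}^2}$ of $(X,0,0),(0,Y,0),(Y,Z,X),(Z,X,Y)$. *)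

(* Defs.v *)
From HB Require Import structures.
From mathcomp Require Import all_boot all_order all_algebra.
Set Implicit Arguments. Unset Strict Implicit. Unset Printing Implicit Defensive.
Import Order.TTheory GRing.Theory Num.Theory.
Local Open Scope ring_scope.

(* Coordinates of points of P^2 (resp. P^5) are nonzero row vectors in R^3 (resp. R^6). *)
Definition i0 : 'I_3 := @Ordinal 3 0 isT.
Definition i1 : 'I_3 := @Ordinal 3 1 isT.
Definition i2 : 'I_3 := @Ordinal 3 2 isT.

Definition vec3 (R : comRingType) (x y z : R) : 'rV[R]_3 :=
  \row_(i < 3) [:: x; y; z]`_i.

Definition Fcomp (R : comRingType) (x y z : R) : seq R :=
  [:: x * y * z;
      x * (z ^+ 2 - x * y);
      x * (x * z - y ^+ 2);
      y * (x ^+ 2 - y * z);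
      y * (x * y - z ^+ 2);
      3%:R * x * y * z - (x ^+ 3 + y ^+ 3 + z ^+ 3)].

Definition Fmap (R : comRingType) (p : 'rV[R]_3) : 'rV[R]_6 :=
  \row_(i < 6) (Fcomp (p 0 i0) (p 0 i1) (p 0 i2))`_i.

(* Directional derivative (Jacobian applied to v) of F at p:
   d/dt F(p + t v) at t = 0, computed with polynomials in t. *)
Definition dF (R : comRingType) (p v : 'rV[R]_3) : 'rV[R]_6 :=
  \row_(i < 6)
    ((Fmap (\row_(j < 3) ((p 0 j)%:P + (v 0 j)%:P * 'X)) 0 i)^`()).[0].

Definition proj_eq (R : fieldType) n (u v : 'rV[R]_n) : Prop :=
  exists c : R, c != 0 /\ v = c *: u.

(* Differential of the induced map P^2 -> P^5 injective at [p]: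
   the induced map C^3/<p> -> C^6/<F(p)> has zero kernel. *)
Definition immersion_at (R : fieldType) (p : 'rV[R]_3) : Prop :=
  forall v : 'rV[R]_3,
    (exists c : R, dF p v = c *: Fmap p) -> exists d : R, v = d *: p.

Definition E1 (R : fieldType) (p : 'rV[R]_3) : Prop :=
  proj_eq p (vec3 1 0 0) \/ proj_eq p (vec3 0 1 0) \/ proj_eq p (vec3 0 0 1).

Definition E2 (R : fieldType) (w : R) (p : 'rV[R]_3) : Prop :=
  proj_eq p (vec3 1 1 1) \/ proj_eq p (vec3 w (w ^+ 2) 1)
  \/ proj_eq p (vec3 (w ^+ 2) w 1).

Definition e6 (R : comRingType) (k : nat) : 'rV[R]_6 :=
  \row_(i < 6) (if val i == k then 1 else 0).

(* Main.v *)
Require Import Defs.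
From HB Require Import structures.
From mathcomp Require Import all_boot all_order all_algebra.
From mathcomp Require Import ring.
Import Order.TTheory GRing.Theory Num.Theory.
Local Open Scope ring_scope.

Definition vec6 {R : comNzRingType} (a b c d e f : R) : 'rV[R]_6 :=
  \row_(i < 6) [:: a; b; c; d; e; f]`_i.

Section Gen.
Variable R : comNzRingType.
Implicit Types x y z a b c : R.

Definition dJ0 x y z a b c := (x * y * c + x * z * b + y * z * a).
Definition dJ1 x y z a b c := (- x^+2 * b - 2%:R * x * y * a + 2%:R * x * z * c + z^+2 * a).
Definition dJ2 x y z a b c := (x^+2 * c - 2%:R * x * y * b + 2%:R * x * z * a - y^+2 * a).
Definition dJ3 x y z a b c := (x^+2 * b + 2%:R * x * y * a - y^+2 * c - 2%:R * y * z * b).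
Definition dJ4 x y z a b c := (2%:R * x * y * b + y^+2 * a - 2%:R * y * z * c - z^+2 * b).
Definition dJ5 x y z a b c := (- 3%:R * x^+2 * a + 3%:R * x * y * c + 3%:R * x * z * b - 3%:R * y^+2 * b + 3%:R * y * z * a - 3%:R * z^+2 * c).

Lemma dFE x y z a b c :
  dF (vec3 x y z) (vec3 a b c) = vec6 (dJ0 x y z a b c) (dJ1 x y z a b c)
    (dJ2 x y z a b c) (dJ3 x y z a b c) (dJ4 x y z a b c) (dJ5 x y z a b c).
Proof.
apply/rowP => i; rewrite /dF /Fmap /vec6 /vec3 !mxE /=.
case: i => [[|[|[|[|[|[|//]]]]]] Hi] /=; rewrite !derivE !hornerE /=;
  rewrite /dJ0 /dJ1 /dJ2 /dJ3 /dJ4 /dJ5; ring.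
Qed.

Lemma vec3E (p : 'rV[R]_3) : p = vec3 (p 0 i0) (p 0 i1) (p 0 i2).
Proof.
apply/rowP => i; rewrite mxE; case: i => [[|[|[|//]]] Hi] /=;
  congr (p 0 _); exact: val_inj.
Qed.

Lemma vec3_inj x y z a b c : vec3 x y z = vec3 a b c -> [/\ x = a, y = b & z = c].
Proof.
move/rowP=> H; split; [move: (H i0) | move: (H i1) | move: (H i2)]; by rewrite !mxE.
Qed.

Lemma vec3Z c x y z : c *: vec3 x y z = vec3 (c * x) (c * y) (c * z).
Proof. by apply/rowP => i; rewrite !mxE; case: i => [[|[|[|//]]] Hi]. Qed.

Lemma vec30 : (0 : 'rV[R]_3) = vec3 0 0 0.
Proof. by apply/rowP => i; rewrite !mxE; case: i => [[|[|[|//]]] Hi]. Qed.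

Lemma vec6_inj x y z a b c x' y' z' a' b' c' :
  vec6 x y z a b c = vec6 x' y' z' a' b' c' ->
  [/\ x = x', y = y', z = z', a = a' & [/\ b = b' & c = c']].
Proof.
move/rowP=> H.
have h := fun (k : nat) (Hk : (k < 6)%N) => H (Ordinal Hk); rewrite /vec6 in h.
have := h 0%N isT; have := h 1%N isT; have := h 2%N isT; have := h 3%N isT;
have := h 4%N isT; have := h 5%N isT; rewrite !mxE /= => *; by [].
Qed.

Lemma vec6Z k x y z a b c :
  k *: vec6 x y z a b c = vec6 (k * x) (k * y) (k * z) (k * a) (k * b) (k * c).
Proof. by apply/rowP => i; rewrite !mxE; case: i => [[|[|[|[|[|[|//]]]]]] Hi]. Qed.

Lemma vec60 : (0 : 'rV[R]_6) = vec6 0 0 0 0 0 0.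
Proof. by apply/rowP => i; rewrite !mxE; case: i => [[|[|[|[|[|[|//]]]]]] Hi]. Qed.

Lemma FmapE x y z : Fmap (vec3 x y z) = vec6 (x * y * z) (x * (z ^+ 2 - x * y))
  (x * (x * z - y ^+ 2)) (y * (x ^+ 2 - y * z)) (y * (x * y - z ^+ 2))
  (3%:R * x * y * z - (x ^+ 3 + y ^+ 3 + z ^+ 3)).
Proof. by apply/rowP => i; rewrite /Fmap /vec3 !mxE; case: i => [[|[|[|[|[|[|//]]]]]] Hi]. Qed.

Lemma e6E5 : e6 R 5 = vec6 0 0 0 0 0 1.
Proof. by apply/rowP => i; rewrite !mxE; case: i => [[|[|[|[|[|[|//]]]]]] Hi]. Qed.
Lemma e6E0 : e6 R 0 = vec6 1 0 0 0 0 0.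
Proof. by apply/rowP => i; rewrite !mxE; case: i => [[|[|[|[|[|[|//]]]]]] Hi]. Qed.

End Gen.
Arguments dJ0 {R}. Arguments dJ1 {R}. Arguments dJ2 {R}. Arguments dJ3 {R}. Arguments dJ4 {R}. Arguments dJ5 {R}.
Lemma cert00 (R : comNzRingType) (x y z a b c : R) :
  3%:R * x^+6 * a =
  (3%:R * x^+4 - 2%:R * x^+2 * y * z - 2%:R * x * y^+3 - 2%:R * x * z^+3 + 4%:R * y^+2 * z^+2) * dJ0 x y z a b c + (- 2%:R * x^+3 * z - 3%:R * x^+2 * y^+2 - 2%:R * x * y * z^+2 - 2%:R * y^+3 * z) * dJ1 x y z a b c + (x^+2 * z^+2 + 2%:R * x * y^+2 * z + 2%:R * y * z^+3) * dJ2 x y z a b c + (- 2%:R * x^+3 * z - 2%:R * x^+2 * y^+2) * dJ3 x y z a b c + (- 2%:R * x^+3 * y - 2%:R * x^+2 * z^+2) * dJ4 x y z a b c + (- x^+4) * dJ5 x y z a b c.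
Proof. rewrite /dJ0 /dJ1 /dJ2 /dJ3 /dJ4 /dJ5; ring. Qed.

Lemma cert01 (R : comNzRingType) (x y z a b c : R) :
  3%:R * x^+6 * b =
  (- x^+3 * y + 4%:R * x^+2 * z^+2 + x * y^+2 * z - 3%:R * y * z^+3) * dJ0 x y z a b c + (2%:R * x^+2 * y * z + 2%:R * x * y^+3 + 3%:R * y^+2 * z^+2) * dJ1 x y z a b c + (- 2%:R * x^+2 * y^+2) * dJ2 x y z a b c + (3%:R * x^+4 + x^+2 * y * z - 3%:R * x * z^+3) * dJ3 x y z a b c + (x^+3 * z + 2%:R * x^+2 * y^+2 + 3%:R * x * y * z^+2) * dJ4 x y z a b c + (2%:R * x^+3 * y) * dJ5 x y z a b c.
Proof. rewrite /dJ0 /dJ1 /dJ2 /dJ3 /dJ4 /dJ5; ring. Qed.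

Lemma cert02 (R : comNzRingType) (x y z a b c : R) :
  3%:R * x^+6 * c =
  (- x^+3 * z + 4%:R * x^+2 * y^+2 + x * y * z^+2 - 3%:R * y^+3 * z) * dJ0 x y z a b c + (x^+3 * y + 4%:R * x^+2 * z^+2 + 3%:R * x * y^+2 * z) * dJ1 x y z a b c + (3%:R * x^+4 - x^+2 * y * z - 3%:R * x * y^+3 - 2%:R * x * z^+3 - 3%:R * y^+2 * z^+2) * dJ2 x y z a b c + (x^+3 * y + 2%:R * x^+2 * z^+2 + 3%:R * x * y^+2 * z) * dJ3 x y z a b c + (3%:R * x^+4 + x^+2 * y * z - 3%:R * x * y^+3) * dJ4 x y z a b c + (2%:R * x^+3 * z) * dJ5 x y z a b c.
Proof. rewrite /dJ0 /dJ1 /dJ2 /dJ3 /dJ4 /dJ5; ring. Qed.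

Lemma cert10 (R : comNzRingType) (x y z a b c : R) :
  3%:R * y^+6 * a =
  (x^+2 * y * z - x * y^+3 - 3%:R * x * z^+3 + 4%:R * y^+2 * z^+2) * dJ0 x y z a b c + (- 2%:R * x^+2 * y^+2 - 3%:R * x * y * z^+2 - y^+3 * z) * dJ1 x y z a b c + (- x * y^+2 * z - 3%:R * y^+4 + 3%:R * y * z^+3) * dJ2 x y z a b c + (2%:R * x^+2 * y^+2) * dJ3 x y z a b c + (- 2%:R * x^+3 * y - 3%:R * x^+2 * z^+2 - 2%:R * x * y^+2 * z) * dJ4 x y z a b c + (2%:R * x * y^+3) * dJ5 x y z a b c.
Proof. rewrite /dJ0 /dJ1 /dJ2 /dJ3 /dJ4 /dJ5; ring. Qed.

Lemma cert11 (R : comNzRingType) (x y z a b c : R) :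
  3%:R * y^+6 * b =
  (- 2%:R * x^+3 * y + 4%:R * x^+2 * z^+2 - 2%:R * x * y^+2 * z + 3%:R * y^+4 - 2%:R * y * z^+3) * dJ0 x y z a b c + (2%:R * x * y^+3 + 2%:R * y^+2 * z^+2) * dJ1 x y z a b c + (2%:R * x^+2 * y^+2 + 2%:R * y^+3 * z) * dJ2 x y z a b c + (- 2%:R * x^+2 * y * z - 2%:R * x * z^+3 - y^+2 * z^+2) * dJ3 x y z a b c + (2%:R * x^+3 * z + 3%:R * x^+2 * y^+2 + 2%:R * x * y * z^+2 + 2%:R * y^+3 * z) * dJ4 x y z a b c + (- y^+4) * dJ5 x y z a b c.
Proof. rewrite /dJ0 /dJ1 /dJ2 /dJ3 /dJ4 /dJ5; ring. Qed.

Lemma cert12 (R : comNzRingType) (x y z a b c : R) :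
  3%:R * y^+6 * c =
  (- 3%:R * x^+3 * z + 4%:R * x^+2 * y^+2 + x * y * z^+2 - y^+3 * z) * dJ0 x y z a b c + (3%:R * x^+3 * y - x * y^+2 * z - 3%:R * y^+4) * dJ1 x y z a b c + (- 3%:R * x^+2 * y * z - x * y^+3 - 2%:R * y^+2 * z^+2) * dJ2 x y z a b c + (3%:R * x^+3 * y + 3%:R * x^+2 * z^+2 + x * y^+2 * z - 3%:R * y^+4 + 2%:R * y * z^+3) * dJ3 x y z a b c + (- 3%:R * x^+2 * y * z - x * y^+3 - 4%:R * y^+2 * z^+2) * dJ4 x y z a b c + (2%:R * y^+3 * z) * dJ5 x y z a b c.
Proof. rewrite /dJ0 /dJ1 /dJ2 /dJ3 /dJ4 /dJ5; ring. Qed.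

Lemma cert20 (R : comNzRingType) (x y z a b c : R) :
  3%:R * z^+6 * a =
  (x^+2 * y * z - 3%:R * x * y^+3 - x * z^+3 + 4%:R * y^+2 * z^+2) * dJ0 x y z a b c + (- 2%:R * x^+3 * z - 3%:R * x^+2 * y^+2 - x * y * z^+2 - 3%:R * y^+3 * z + 3%:R * z^+4) * dJ1 x y z a b c + (4%:R * x^+2 * z^+2 + 3%:R * x * y^+2 * z + y * z^+3) * dJ2 x y z a b c + (- 2%:R * x^+3 * z - 3%:R * x^+2 * y^+2 - 2%:R * x * y * z^+2) * dJ3 x y z a b c + (2%:R * x^+2 * z^+2) * dJ4 x y z a b c + (2%:R * x * z^+3) * dJ5 x y z a b c.
Proof. rewrite /dJ0 /dJ1 /dJ2 /dJ3 /dJ4 /dJ5; ring. Qed.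

Lemma cert21 (R : comNzRingType) (x y z a b c : R) :
  3%:R * z^+6 * b =
  (- 3%:R * x^+3 * y + 4%:R * x^+2 * z^+2 + x * y^+2 * z - y * z^+3) * dJ0 x y z a b c + (- 2%:R * y^+2 * z^+2) * dJ1 x y z a b c + (3%:R * x^+2 * y^+2 + 2%:R * x * y * z^+2 + 2%:R * y^+3 * z) * dJ2 x y z a b c + (- 3%:R * x^+2 * y * z - x * z^+3 - 4%:R * y^+2 * z^+2) * dJ3 x y z a b c + (3%:R * x^+3 * z + 3%:R * x^+2 * y^+2 + x * y * z^+2 + 2%:R * y^+3 * z - 3%:R * z^+4) * dJ4 x y z a b c + (2%:R * y * z^+3) * dJ5 x y z a b c.
Proof. rewrite /dJ0 /dJ1 /dJ2 /dJ3 /dJ4 /dJ5; ring. Qed.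

Lemma cert22 (R : comNzRingType) (x y z a b c : R) :
  3%:R * z^+6 * c =
  (- 2%:R * x^+3 * z + 4%:R * x^+2 * y^+2 - 2%:R * x * y * z^+2 - 2%:R * y^+3 * z + 3%:R * z^+4) * dJ0 x y z a b c + (2%:R * x^+3 * y + x^+2 * z^+2 + 2%:R * x * y^+2 * z) * dJ1 x y z a b c + (- 2%:R * x^+2 * y * z - 2%:R * x * y^+3 - 2%:R * x * z^+3 - 3%:R * y^+2 * z^+2) * dJ2 x y z a b c + (2%:R * x^+3 * y + 3%:R * x^+2 * z^+2 + 2%:R * x * y^+2 * z + 2%:R * y * z^+3) * dJ3 x y z a b c + (- 2%:R * x^+2 * y * z - 2%:R * x * y^+3 - y^+2 * z^+2) * dJ4 x y z a b c + (- z^+4) * dJ5 x y z a b c.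
Proof. rewrite /dJ0 /dJ1 /dJ2 /dJ3 /dJ4 /dJ5; ring. Qed.

Set Implicit Arguments. Unset Strict Implicit.
Section Fld.
Variable R : fieldType.
Implicit Types x y z a b c k : R.

Definition nz x y z := ~ (x = 0 /\ y = 0 /\ z = 0).
Definition h1 x y z := x * (x * y - z ^+ 2) * (x * z - y ^+ 2).
Definition h2 x y z := z * (x ^+ 2 - y * z) * (x * z - y ^+ 2).
Definition h3 x y z := y * (x ^+ 2 - y * z) * (x * y - z ^+ 2).
Definition E1c x y z := (y = 0 /\ z = 0) \/ (x = 0 /\ z = 0) \/ (x = 0 /\ y = 0).
Definition E2c x y z := [/\ x * y - z ^+ 2 = 0, x * z - y ^+ 2 = 0 & x ^+ 2 - y * z = 0].

Lemma lincomb (P u k : R) : P = k * u -> u = 0 -> P = 0.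
Proof. by move=> -> ->; rewrite mulr0. Qed.

Lemma mul3_eq0 (u v s : R) : u * v * s = 0 -> [\/ u = 0, v = 0 | s = 0].
Proof.
move/eqP; rewrite !mulf_eq0 => /orP [/orP [/eqP|/eqP]|/eqP]; by [constructor 1|constructor 2|constructor 3].
Qed.

Lemma exc x y z : nz x y z -> h1 x y z = 0 -> h2 x y z = 0 -> h3 x y z = 0 ->
  E1c x y z \/ E2c x y z.
Proof.
rewrite /nz /h1 /h2 /h3 /E1c /E2c => nz0 H1 H2 H3.
have [x0|x0] := eqVneq x 0.
  have [y0|y0] := eqVneq y 0; first by left; right; right.
  have [z0|z0] := eqVneq z 0; first by left; right; left.
  exfalso; have : y ^+ 3 * z ^+ 2 = z * (x ^+ 2 - y * z) * (x * z - y ^+ 2) by rewrite x0; ring.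
  by rewrite H2 => /eqP; rewrite mulf_eq0 !expf_eq0 /= (negbTE y0) (negbTE z0).
have [y0|y0] := eqVneq y 0.
  have [z0|z0] := eqVneq z 0; first by left; left.
  exfalso; have : - (x ^+ 2 * z ^+ 3) = x * (x * y - z ^+ 2) * (x * z - y ^+ 2) by rewrite y0; ring.
  by rewrite H1 => /eqP; rewrite oppr_eq0 mulf_eq0 !expf_eq0 /= (negbTE x0) (negbTE z0).
have [z0|z0] := eqVneq z 0.
  exfalso; have : - (x ^+ 2 * y ^+ 3) = x * (x * y - z ^+ 2) * (x * z - y ^+ 2) by rewrite z0; ring.
  by rewrite H1 => /eqP; rewrite oppr_eq0 mulf_eq0 !expf_eq0 /= (negbTE x0) (negbTE y0).
right.
have eC : y * z * (x ^+ 2 - y * z) = (x * y - z ^+ 2) * (x * z - y ^+ 2) + (x * y - z ^+ 2) * y ^+ 2 + (x * z - y ^+ 2) * z ^+ 2 by ring.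
have eB : x * z * (x * z - y ^+ 2) = (x ^+ 2 - y * z) * z ^+ 2 - (x * y - z ^+ 2) * (y * z) by ring.
have eA : x * y * (x * y - z ^+ 2) = (x ^+ 2 - y * z) * y ^+ 2 - (x * z - y ^+ 2) * (y * z) by ring.
have nzm (u v s : R) : u != 0 -> v != 0 -> u * v * s = 0 -> s = 0.
  by move=> hu hv /eqP; rewrite !mulf_eq0 (negbTE hu) (negbTE hv) /= => /eqP.
have hA : x * y - z ^+ 2 = 0 \/ x * z - y ^+ 2 = 0.
  by case/mul3_eq0: H1 => [/eqP|->|->]; [rewrite (negbTE x0)|left|right].
have hB : x ^+ 2 - y * z = 0 \/ x * z - y ^+ 2 = 0.
  by case/mul3_eq0: H2 => [/eqP|->|->]; [rewrite (negbTE z0)|left|right].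
have hC : x ^+ 2 - y * z = 0 \/ x * y - z ^+ 2 = 0.
  by case/mul3_eq0: H3 => [/eqP|->|->]; [rewrite (negbTE y0)|left|right].
case: hA => [A0|B0].
  case: hB => [C0|B0].
    split => //; apply: (nzm x z) => //; by rewrite eB A0 C0; ring.
  split => //; apply: (nzm y z) => //; by rewrite eC A0 B0; ring.
case: hC => [C0|A0].
  split => //; apply: (nzm x y) => //; by rewrite eA B0 C0; ring.
split => //; apply: (nzm y z) => //; by rewrite eC A0 B0; ring.
Qed.

Lemma E2c_nz x y z : nz x y z -> E2c x y z -> [/\ x != 0, y != 0 & z != 0].
Proof.
rewrite /nz => nz0 [A0 B0 C0].
have x0 : x != 0.
  apply/negP => /eqP x0; apply: nz0.
  move: B0 A0; rewrite x0 !mul0r !sub0r => /eqP; rewrite oppr_eq0 expf_eq0 /= => /eqP y0 /eqP.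
  by rewrite oppr_eq0 expf_eq0 /= => /eqP.
split => //; apply/negP => /eqP e; move: C0; rewrite e ?mul0r ?mulr0 subr0 => /eqP;
  by rewrite expf_eq0 /= (negbTE x0).
Qed.

Lemma E2c_F x y z : nz x y z -> E2c x y z ->
  Fmap (vec3 x y z) = vec6 (x * y * z) 0 0 0 0 0 /\ x * y * z != 0.
Proof.
move=> nz0 E; have [x0 y0 z0] := E2c_nz nz0 E; case: E => [A0 B0 C0].
split; last by rewrite !mulf_neq0.
rewrite FmapE; congr vec6.
- by apply: (lincomb (u := x * y - z ^+ 2) (k := - x)) => //; ring.
- by apply: (lincomb (u := x * z - y ^+ 2) (k := x)) => //; ring.
- by apply: (lincomb (u := x ^+ 2 - y * z) (k := y)) => //; ring.
- by apply: (lincomb (u := x * y - z ^+ 2) (k := y)) => //; ring.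
have -> : 3%:R * x * y * z - (x ^+ 3 + y ^+ 3 + z ^+ 3) =
  y * (x * z - y ^+ 2) + z * (x * y - z ^+ 2) - x * (x ^+ 2 - y * z) by ring.
by rewrite A0 B0 C0 !mulr0 !subr0 addr0.
Qed.

Lemma E1c_F x y z : nz x y z -> E1c x y z ->
  Fmap (vec3 x y z) = vec6 0 0 0 0 0 (- (x ^+ 3 + y ^+ 3 + z ^+ 3)) /\
  - (x ^+ 3 + y ^+ 3 + z ^+ 3) != 0.
Proof.
rewrite /nz /E1c FmapE => nz0 [[ey ez]|[[ex ez]|[ex ey]]]; rewrite ?ex ?ey ?ez; split;
  try (congr vec6; ring).
- have x0 : x != 0 by apply/eqP => x0; apply: nz0; do !split.
  by rewrite oppr_eq0 expr0n /= !addr0 expf_neq0.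
- have y0 : y != 0 by apply/eqP => y0; apply: nz0; do !split.
  by rewrite oppr_eq0 expr0n /= add0r addr0 expf_neq0.
- have z0 : z != 0 by apply/eqP => z0; apply: nz0; do !split.
  by rewrite oppr_eq0 expr0n /= !add0r expf_neq0.
Qed.

Lemma proj_eq_sym n (u v : 'rV[R]_n) : proj_eq u v -> proj_eq v u.
Proof.
case=> c [c0 ->]; exists c^-1; split; first by rewrite invr_eq0.
by rewrite scalerA mulVf // scale1r.
Qed.

Lemma E1_E1c x y z : E1 (vec3 x y z) -> E1c x y z.
Proof.
rewrite /E1 /E1c => H.
have m0 (c u : R) : c != 0 -> c * u = 0 -> u = 0.
  by move=> c0 /eqP; rewrite mulf_eq0 (negbTE c0) => /eqP.
case: H => [|[|]] [c [c0 /esym]]; rewrite vec3Z => /vec3_inj [ex ey ez].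
- by left; split; apply: (m0 c).
- by right; left; split; apply: (m0 c).
- by right; right; split; apply: (m0 c).
Qed.

Lemma E1c_E1 x y z : nz x y z -> E1c x y z -> E1 (vec3 x y z).
Proof.
rewrite /nz /E1c /E1 => nz0 [[ey ez]|[[ex ez]|[ex ey]]]; rewrite ?ex ?ey ?ez.
- have x0 : x != 0 by apply/eqP => x0; apply: nz0; do !split.
  left; exists x^-1; split; first by rewrite invr_eq0.
  by rewrite vec3Z mulVf // mulr0.
- have y0 : y != 0 by apply/eqP => y0; apply: nz0; do !split.
  right; left; exists y^-1; split; first by rewrite invr_eq0.
  by rewrite vec3Z mulVf // mulr0.
- have z0 : z != 0 by apply/eqP => z0; apply: nz0; do !split.
  right; right; exists z^-1; split; first by rewrite invr_eq0.
  by rewrite vec3Z mulVf // mulr0.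
Qed.

Lemma E2c_scale c x y z : c != 0 -> E2c (c * x) (c * y) (c * z) -> E2c x y z.
Proof.
move=> c0 [A0 B0 C0].
have h (u : R) : c ^+ 2 * u = 0 -> u = 0.
  by move/eqP; rewrite mulf_eq0 expf_eq0 /= (negbTE c0) => /eqP.
split; apply: h.
- by rewrite -A0; ring.
- by rewrite -B0; ring.
- by rewrite -C0; ring.
Qed.

Variable w : R.
Hypothesis w3 : w ^+ 3 = 1.
Hypothesis ws : 1 + w + w ^+ 2 = 0.

Lemma E2_E2c x y z : E2 w (vec3 x y z) -> E2c x y z.
Proof.
rewrite /E2 => [[|[|]]] [c [c0 /esym]]; rewrite vec3Z => /vec3_inj [ex ey ez];
  apply: (E2c_scale c0); rewrite ex ey ez.
- by split; ring.
- split.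
  + by apply: (lincomb (u := w ^+ 3 - 1) (k := 1)); [ring|rewrite w3 subrr].
  + by apply: (lincomb (u := w ^+ 3 - 1) (k := - w)); [ring|rewrite w3 subrr].
  + by ring.
- split.
  + by apply: (lincomb (u := w ^+ 3 - 1) (k := 1)); [ring|rewrite w3 subrr].
  + by ring.
  + by apply: (lincomb (u := w ^+ 3 - 1) (k := w)); [ring|rewrite w3 subrr].
Qed.

Lemma E2c_E2 x y z : nz x y z -> E2c x y z -> E2 w (vec3 x y z).
Proof.
move=> nz0 E; have [x0 y0 z0] := E2c_nz nz0 E; case: E => [A0 B0 C0].
have e3 : (y - x) * (y - w * x) * (y - w ^+ 2 * x) = 0.
  have -> : (y - x) * (y - w * x) * (y - w ^+ 2 * x) =
    y * (x * z - y ^+ 2) * (-1) + x * (x ^+ 2 - y * z) * (-1)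
    - (1 + w + w ^+ 2) * (x * y ^+ 2 - x ^+ 2 * y) + (w ^+ 3 - 1) * (x ^+ 2 * y - x ^+ 3) by ring.
  by rewrite B0 C0 ws w3 subrr; ring.
have zx (t : R) : y = t * x -> z = t ^+ 2 * x.
  move=> ey; apply: (mulfI x0).
  by rewrite -[x * z](subrK (y ^+ 2)) B0 ey; ring.
have fin (t : R) (u v : R) : y = t * x -> u * t = v -> u * t ^+ 2 = 1 ->
    u != 0 -> proj_eq (vec3 x y z) (vec3 u v 1).
  move=> ey ev e1 u0; exists (u / x); split; first by rewrite mulf_neq0 ?invr_eq0.
  rewrite vec3Z (zx t ey) ey; congr vec3; rewrite -?ev -?e1; field; exact: x0.
have w0 : w != 0.
  by apply/eqP => w0; move: w3; rewrite w0 expr0n /= => /eqP; rewrite eq_sym oner_eq0.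
case/mul3_eq0: e3 => /eqP; rewrite subr_eq0 => /eqP ey.
- left; apply: (fin 1).
  + by rewrite mul1r.
  + by rewrite mulr1.
  + by rewrite expr1n mulr1.
  + exact: oner_neq0.
- right; left; apply: (fin w).
  + exact: ey.
  + by rewrite expr2.
  + by rewrite -exprS w3.
  + exact: w0.
- right; right; apply: (fin (w ^+ 2)).
  + exact: ey.
  + by rewrite -exprD exprS w3 mulr1.
  + have -> : w ^+ 2 * (w ^+ 2) ^+ 2 = (w ^+ 3) ^+ 2 by rewrite -!exprM -exprD.
    by rewrite w3 expr1n.
  + by rewrite expf_eq0 /= (negbTE w0).
Qed.

End Fld.

Section Fld2.
Variable R : fieldType.
Implicit Types x y z a b c k : R.

Definition appF (G : R -> R -> R -> R -> R -> R -> R) x y z :=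
  G (x * y * z) (x * (z ^+ 2 - x * y)) (x * (x * z - y ^+ 2))
    (y * (x ^+ 2 - y * z)) (y * (x * y - z ^+ 2))
    (3%:R * x * y * z - (x ^+ 3 + y ^+ 3 + z ^+ 3)).

Lemma inj_core (Gx Gy Gz : R -> R -> R -> R -> R -> R -> R) (h : R -> R -> R -> R)
  (HG : forall x y z, [/\ appF Gx x y z = h x y z * x, appF Gy x y z = h x y z * y
                        & appF Gz x y z = h x y z * z])
  (HH : forall k a b c d e f,
     [/\ Gx (k * a) (k * b) (k * c) (k * d) (k * e) (k * f) = k ^+ 2 * Gx a b c d e f,
         Gy (k * a) (k * b) (k * c) (k * d) (k * e) (k * f) = k ^+ 2 * Gy a b c d e f
       & Gz (k * a) (k * b) (k * c) (k * d) (k * e) (k * f) = k ^+ 2 * Gz a b c d e f])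
  (H0 : h 0 0 0 = 0)
  x y z x' y' z' c : c != 0 -> h x y z != 0 ->
  Fmap (vec3 x' y' z') = c *: Fmap (vec3 x y z) -> proj_eq (vec3 x y z) (vec3 x' y' z').
Proof.
move=> c0 hp; rewrite !FmapE vec6Z => /vec6_inj [e0 e1 e2 e3 [e4 e5]].
have [Gx1 Gy1 Gz1] := HG x y z.
have [Gx2 Gy2 Gz2] := HG x' y' z'.
rewrite /appF in Gx1 Gy1 Gz1 Gx2 Gy2 Gz2.
have [Hx Hy Hz] := HH c (x * y * z) (x * (z ^+ 2 - x * y)) (x * (x * z - y ^+ 2))
    (y * (x ^+ 2 - y * z)) (y * (x * y - z ^+ 2))
    (3%:R * x * y * z - (x ^+ 3 + y ^+ 3 + z ^+ 3)).
have Ex : h x' y' z' * x' = c ^+ 2 * (h x y z * x).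
  by rewrite -Gx2 e0 e1 e2 e3 e4 e5 Hx Gx1.
have Ey : h x' y' z' * y' = c ^+ 2 * (h x y z * y).
  by rewrite -Gy2 e0 e1 e2 e3 e4 e5 Hy Gy1.
have Ez : h x' y' z' * z' = c ^+ 2 * (h x y z * z).
  by rewrite -Gz2 e0 e1 e2 e3 e4 e5 Hz Gz1.
have [hq|hq] := eqVneq (h x' y' z') 0.
  exfalso.
  have m0 (u : R) : 0 = c ^+ 2 * (h x y z * u) -> u = 0.
    by move/esym/eqP; rewrite !mulf_eq0 (negbTE c0) (negbTE hp) /= => /eqP.
  move: Ex Ey Ez; rewrite hq !mul0r => /m0 x0 /m0 y0 /m0 z0.
  by move: hp; rewrite x0 y0 z0 H0 eqxx.
exists (c ^+ 2 * h x y z / h x' y' z'); split.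
  by rewrite !mulf_neq0 ?invr_eq0 ?expf_neq0.
rewrite vec3Z; congr vec3; apply: (mulfI hq); [rewrite Ex|rewrite Ey|rewrite Ez];
  field; exact: hq.
Qed.

Definition G1x (a b c d e f : R) := - (b * c).
Definition G1y (a b c d e f : R) := c * e.
Definition G1z (a b c d e f : R) := - b ^+ 2 - b * d.
Definition G2x (a b c d e f : R) := c ^+ 2 + c * e.
Definition G2y (a b c d e f : R) := b * d + d ^+ 2.
Definition G2z (a b c d e f : R) := - (a * f) + b * c + 2%:R * b * e + d * e.
Definition G3x (a b c d e f : R) := - (b * d).
Definition G3y (a b c d e f : R) := d * e.
Definition G3z (a b c d e f : R) := c * e + e ^+ 2.

Lemma HG1 x y z : [/\ appF G1x x y z = h1 x y z * x, appF G1y x y z = h1 x y z * y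
                        & appF G1z x y z = h1 x y z * z].
Proof. by rewrite /appF /G1x /G1y /G1z /h1; split; ring. Qed.
Lemma HG2 x y z : [/\ appF G2x x y z = h2 x y z * x, appF G2y x y z = h2 x y z * y
                        & appF G2z x y z = h2 x y z * z].
Proof. by rewrite /appF /G2x /G2y /G2z /h2; split; ring. Qed.
Lemma HG3 x y z : [/\ appF G3x x y z = h3 x y z * x, appF G3y x y z = h3 x y z * y
                        & appF G3z x y z = h3 x y z * z].
Proof. by rewrite /appF /G3x /G3y /G3z /h3; split; ring. Qed.

Lemma inj1 x y z x' y' z' c : c != 0 -> h1 x y z != 0 ->
  Fmap (vec3 x' y' z') = c *: Fmap (vec3 x y z) -> proj_eq (vec3 x y z) (vec3 x' y' z').
Proof.
apply: (inj_core (Gx := G1x) (Gy := G1y) (Gz := G1z)).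
- exact: HG1.
- by move=> *; rewrite /G1x /G1y /G1z; split; ring.
- by rewrite /h1; ring.
Qed.
Lemma inj2 x y z x' y' z' c : c != 0 -> h2 x y z != 0 ->
  Fmap (vec3 x' y' z') = c *: Fmap (vec3 x y z) -> proj_eq (vec3 x y z) (vec3 x' y' z').
Proof.
apply: (inj_core (Gx := G2x) (Gy := G2y) (Gz := G2z)).
- exact: HG2.
- by move=> *; rewrite /G2x /G2y /G2z; split; ring.
- by rewrite /h2; ring.
Qed.
Lemma inj3 x y z x' y' z' c : c != 0 -> h3 x y z != 0 ->
  Fmap (vec3 x' y' z') = c *: Fmap (vec3 x y z) -> proj_eq (vec3 x y z) (vec3 x' y' z').
Proof.
apply: (inj_core (Gx := G3x) (Gy := G3y) (Gz := G3z)).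
- exact: HG3.
- by move=> *; rewrite /G3x /G3y /G3z; split; ring.
- by rewrite /h3; ring.
Qed.

End Fld2.

Section Fld3.
Variable R : fieldType.
Implicit Types x y z a b c k : R.

Lemma certz (u v : R) : 3%:R != 0 :> R -> u != 0 -> 3%:R * u ^+ 6 * v = 0 -> v = 0.
Proof.
move=> h3 u0; have h : 3%:R * u ^+ 6 != 0 by rewrite mulf_neq0 // expf_neq0.
by move/eqP; rewrite mulf_eq0 (negbTE h) /= => /eqP.
Qed.

Lemma kerJ x y z a b c : 3%:R != 0 :> R -> nz x y z ->
  dJ0 x y z a b c = 0 -> dJ1 x y z a b c = 0 -> dJ2 x y z a b c = 0 ->
  dJ3 x y z a b c = 0 -> dJ4 x y z a b c = 0 -> dJ5 x y z a b c = 0 ->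
  [/\ a = 0, b = 0 & c = 0].
Proof.
move=> h3 nz0 Z0 Z1 Z2 Z3 Z4 Z5.
have [x0|x0] := eqVneq x 0; last first.
  split; apply: (certz h3 x0);
  [rewrite (cert00 _ x y z a b c)|rewrite (cert01 _ x y z a b c)|rewrite (cert02 _ x y z a b c)];
  by rewrite Z0 Z1 Z2 Z3 Z4 Z5; ring.
have [y0|y0] := eqVneq y 0; last first.
  split; apply: (certz h3 y0);
  [rewrite (cert10 _ x y z a b c)|rewrite (cert11 _ x y z a b c)|rewrite (cert12 _ x y z a b c)];
  by rewrite Z0 Z1 Z2 Z3 Z4 Z5; ring.
have [z0|z0] := eqVneq z 0; last first.
  split; apply: (certz h3 z0);
  [rewrite (cert20 _ x y z a b c)|rewrite (cert21 _ x y z a b c)|rewrite (cert22 _ x y z a b c)];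
  by rewrite Z0 Z1 Z2 Z3 Z4 Z5; ring.
by exfalso; apply: nz0.
Qed.

Lemma imm x y z a b c k : 3%:R != 0 :> R -> nz x y z ->
  dF (vec3 x y z) (vec3 a b c) = k *: Fmap (vec3 x y z) ->
  exists d, vec3 a b c = d *: vec3 x y z.
Proof.
move=> h3 nz0; rewrite dFE FmapE vec6Z => /vec6_inj [e0 e1 e2 e3 [e4 e5]].
have [A0 B0 C0] : [/\ 3%:R * a - k * x = 0, 3%:R * b - k * y = 0 & 3%:R * c - k * z = 0].
  apply: (kerJ h3 nz0).
  - rewrite (_ : dJ0 _ _ _ _ _ _ = 3%:R * dJ0 x y z a b c - k * (3%:R * (x * y * z))).
      by rewrite e0; ring.
    by rewrite /dJ0; ring.
  - rewrite (_ : dJ1 _ _ _ _ _ _ = 3%:R * dJ1 x y z a b c - k * (3%:R * (x * (z ^+ 2 - x * y)))).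
      by rewrite e1; ring.
    by rewrite /dJ1; ring.
  - rewrite (_ : dJ2 _ _ _ _ _ _ = 3%:R * dJ2 x y z a b c - k * (3%:R * (x * (x * z - y ^+ 2)))).
      by rewrite e2; ring.
    by rewrite /dJ2; ring.
  - rewrite (_ : dJ3 _ _ _ _ _ _ = 3%:R * dJ3 x y z a b c - k * (3%:R * (y * (x ^+ 2 - y * z)))).
      by rewrite e3; ring.
    by rewrite /dJ3; ring.
  - rewrite (_ : dJ4 _ _ _ _ _ _ = 3%:R * dJ4 x y z a b c - k * (3%:R * (y * (x * y - z ^+ 2)))).
      by rewrite e4; ring.
    by rewrite /dJ4; ring.
  - rewrite (_ : dJ5 _ _ _ _ _ _ = 3%:R * dJ5 x y z a b c - k * (3%:R * (3%:R * x * y * z - (x ^+ 3 + y ^+ 3 + z ^+ 3)))).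
      by rewrite e5; ring.
    by rewrite /dJ5; ring.
exists (k / 3%:R); rewrite vec3Z; congr vec3; apply: (mulfI h3).
- by rewrite -[3%:R * a](subrK (k * x)) A0 add0r; field.
- by rewrite -[3%:R * b](subrK (k * y)) B0 add0r; field.
- by rewrite -[3%:R * c](subrK (k * z)) C0 add0r; field.
Qed.

End Fld3.

Section Main.
Variable R : fieldType.
Implicit Types x y z a b c k : R.

Lemma key x y z : nz x y z ->
  (h1 x y z != 0 \/ h2 x y z != 0 \/ h3 x y z != 0) \/ E1c x y z \/ E2c x y z.
Proof.
move=> nz0.
have [e1|e1] := eqVneq (h1 x y z) 0; last by left; left.
have [e2|e2] := eqVneq (h2 x y z) 0; last by left; right; left.
have [e3|e3] := eqVneq (h3 x y z) 0; last by left; right; right.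
by right; apply: exc.
Qed.

Lemma injh x y z x' y' z' c : c != 0 ->
  (h1 x y z != 0 \/ h2 x y z != 0 \/ h3 x y z != 0) ->
  Fmap (vec3 x' y' z') = c *: Fmap (vec3 x y z) -> proj_eq (vec3 x y z) (vec3 x' y' z').
Proof. by move=> c0 [|[|]] H; [apply: inj1|apply: inj2|apply: inj3]. Qed.

Lemma part1 x y z : nz x y z -> Fmap (vec3 x y z) != 0.
Proof.
move=> nz0; apply/eqP => F0.
case: (key nz0) => [H|[E|E]].
- have hz (h : R) (Gx Gy Gz : R -> R -> R -> R -> R -> R -> R) :
      Gx 0 0 0 0 0 0 = 0 -> Gy 0 0 0 0 0 0 = 0 -> Gz 0 0 0 0 0 0 = 0 ->
      appF Gx x y z = h * x -> appF Gy x y z = h * y -> appF Gz x y z = h * z -> h = 0.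
    move: F0; rewrite FmapE vec60 => /vec6_inj [e0 e1 e2 e3 [e4 e5]].
    rewrite /appF e0 e1 e2 e3 e4 e5 => -> -> -> /esym/eqP + /esym/eqP + /esym/eqP.
    rewrite !mulf_eq0 => /orP [/eqP //|x0] /orP [/eqP //|y0] /orP [/eqP //|z0].
    by exfalso; apply: nz0; split; [|split]; apply/eqP.
  case: H => [|[|]] /eqP H; apply: H.
  + by have [] := HG1 x y z; apply: hz; rewrite /G1x /G1y /G1z; ring.
  + by have [] := HG2 x y z; apply: hz; rewrite /G2x /G2y /G2z; ring.
  + by have [] := HG3 x y z; apply: hz; rewrite /G3x /G3y /G3z; ring.
- have [Fe k0] := E1c_F nz0 E; move: F0; rewrite Fe vec60 => /vec6_inj [_ _ _ _ [_ k]].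
  by move: k0; rewrite k eqxx.
- have [Fe k0] := E2c_F nz0 E; move: F0; rewrite Fe vec60 => /vec6_inj [k _ _ _ [_ _]].
  by move: k0; rewrite k eqxx.
Qed.

Lemma F_E1_E2 x y z x' y' z' c : nz x y z -> nz x' y' z' -> E1c x y z -> E2c x' y' z' ->
  Fmap (vec3 x' y' z') = c *: Fmap (vec3 x y z) -> False.
Proof.
move=> nz0 nz1 E1 E2.
have [Fe _] := E1c_F nz0 E1; have [Fe' k0] := E2c_F nz1 E2.
rewrite Fe Fe' vec6Z => /vec6_inj [k _ _ _ [_ _]].
by move: k0; rewrite k mulr0 eqxx.
Qed.

Lemma part3 w x y z x' y' z' c : w ^+ 3 = 1 -> 1 + w + w ^+ 2 = 0 ->
  nz x y z -> nz x' y' z' -> c != 0 ->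
  Fmap (vec3 x' y' z') = c *: Fmap (vec3 x y z) ->
  proj_eq (vec3 x y z) (vec3 x' y' z') \/
  (E1 (vec3 x y z) /\ E1 (vec3 x' y' z')) \/ (E2 w (vec3 x y z) /\ E2 w (vec3 x' y' z')).
Proof.
move=> w3 ws nz0 nz1 c0 Fq.
have Fp : Fmap (vec3 x y z) = c^-1 *: Fmap (vec3 x' y' z').
  by rewrite Fq scalerA mulVf // scale1r.
have ci : c^-1 != 0 by rewrite invr_eq0.
case: (key nz0) => [H|[E|E]]; first by left; apply: (injh c0 H).
- case: (key nz1) => [H|[E'|E']].
  + by left; apply: proj_eq_sym; apply: (injh ci H).
  + by right; left; split; apply: E1c_E1.
  + by exfalso; apply: (F_E1_E2 nz0 nz1 E E' Fq).
- case: (key nz1) => [H|[E'|E']].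
  + by left; apply: proj_eq_sym; apply: (injh ci H).
  + by exfalso; apply: (F_E1_E2 nz1 nz0 E' E Fp).
  + by right; right; split; apply: E2c_E2.
Qed.

Lemma part4 x y z : nz x y z -> E1 (vec3 x y z) -> proj_eq (Fmap (vec3 x y z)) (e6 R 5).
Proof.
move=> nz0 /E1_E1c E; have [-> k0] := E1c_F nz0 E.
exists (- (x ^+ 3 + y ^+ 3 + z ^+ 3))^-1; split; first by rewrite invr_eq0.
by rewrite e6E5 vec6Z !mulr0 mulVf.
Qed.

Lemma part5 w x y z : w ^+ 3 = 1 -> 1 + w + w ^+ 2 = 0 ->
  nz x y z -> E2 w (vec3 x y z) -> proj_eq (Fmap (vec3 x y z)) (e6 R 0).
Proof.
move=> w3 ws nz0 /(E2_E2c w3) E; have [-> k0] := E2c_F nz0 E.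
exists (x * y * z)^-1; split; first by rewrite invr_eq0.
by rewrite e6E0 vec6Z !mulr0 mulVf.
Qed.

Lemma nzE (p : 'rV[R]_3) : p != 0 -> nz (p 0 i0) (p 0 i1) (p 0 i2).
Proof.
move=> p0 [a [b c]]; move/eqP: p0; apply.
by rewrite [p]vec3E a b c -vec30.
Qed.

End Main.

Unset Implicit Arguments.
Set Strict Implicit.

Theorem lemma5 (R : closedFieldType) (hchar : [pchar R] =i pred0)
    (w : R) (hw : (3%N).-primitive_root w) :
  (* F is a well-defined morphism: no base points *)
  (forall p : 'rV[R]_3, p != 0 -> Fmap p != 0) /\
  (* F is an immersion *)
  (forall p : 'rV[R]_3, p != 0 -> immersion_at p) /\
  (* F is injective except on the two exceptional triples *)
  (forall p q : 'rV[R]_3, p != 0 -> q != 0 -> proj_eq (Fmap p) (Fmap q) ->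
     proj_eq p q \/ (E1 p /\ E1 q) \/ (E2 w p /\ E2 w q)) /\
  (* the exceptional triples are mapped to (0;0;0;0;0;1) and (1;0;0;0;0;0) *)
  (forall p : 'rV[R]_3, p != 0 -> E1 p -> proj_eq (Fmap p) (e6 R 5)) /\
  (forall p : 'rV[R]_3, p != 0 -> E2 w p -> proj_eq (Fmap p) (e6 R 0)).
Proof.
have w3 : w ^+ 3 = 1 := prim_expr_order hw.
have w1 : w != 1.
  apply/eqP => w1; have := prim_order_dvd hw 1; rewrite expr1 w1 eqxx.
  by [].
have ws : 1 + w + w ^+ 2 = 0.
  have : (w - 1) * (1 + w + w ^+ 2) = 0.
    rewrite (_ : (w - 1) * (1 + w + w ^+ 2) = w ^+ 3 - 1); last by ring.
    by rewrite w3 subrr.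
  by move/eqP; rewrite mulf_eq0 subr_eq0 (negbTE w1) /= => /eqP.
have h3 : 3%:R != 0 :> R by move/pcharf0P: hchar => ->.
split; [|split; [|split; [|split]]].
- by move=> p /nzE nz0; rewrite (vec3E _ p); apply: part1.
- move=> p /nzE nz0 v [k]; rewrite (vec3E _ p) (vec3E _ v).
  exact: imm.
- move=> p q /nzE nz0 /nzE nz1 [c [c0]]; rewrite (vec3E _ p) (vec3E _ q).
  exact: part3.
- by move=> p /nzE nz0; rewrite (vec3E _ p); apply: part4.
- by move=> p /nzE nz0; rewrite (vec3E _ p); apply: part5.
Qed.
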